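(* For every set $\Gamma\cup\{\varphi\}$ of formulas over $\Sigma^\circ$: if $\Gamma\vDash^{\mathsf{RN}}_{\mathcal{M}_{\bf mbCcl}}\varphi$ then $\Gamma\vdash_{\bf mbCcl}\varphi$.
   Context: $\Sigma^\circ$ has unary $\neg,\circ$ and binary $\wedge,\vee,\to$. ${\bf mbCcl}$ is the Hilbert calculus with Modus Ponens as only rule and axiom schemata: $\alpha\to(\beta\to\alpha)$; $(\alpha\to(\beta\to\gamma))\to((\alpha\to\beta)\to(\alpha\to\gamma))$; $\alpha\to(\beta\to(\alpha\wedge\beta))$; $(\alpha\wedge\beta)\to\alpha$; $(\alpha\wedge\beta)\to\beta$; $\alpha\to(\alpha\vee\beta)$; $\beta\to(\alpha\vee\beta)$; $(\alpha\to\gamma)\to((\beta\to\gamma)\to((\alpha\vee\beta)\to\gamma))$; $\alpha\vee\neg\alpha$; $\alpha\vee(\alpha\to\beta)$; $\circ\alpha\to(\alpha\to(\neg\alpha\to\beta))$; $\neg(\alpha\wedge\neg\alpha)\to\circ\alpha$. $\mathcal{A}_{\bf mbCcl}$ is the $\Sigma^\circ$-multialgebra with universe $\{F,t,T\}$, $D=\{t,T\}$, $U=\{F\}$: $x\tilde\vee y=U$ if $x=y=F$, else $D$; $x\tilde\wedge y=U$ if $F\in\{x,y\}$, else $D$; $\tilde\neg F=\tilde\neg t=D$, $\tilde\neg T=U$; $F\tilde\to y=D$, $x\tilde\to F=U$ for $x\in\{t,T\}$, $x\tilde\to y=D$ for $x,y\in\{t,T\}$; $\tilde\circ F=\tilde\circ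 T=D$, $\tilde\circ t=U$. A valuation is a map $\nu$ with $\nu(\#\alpha)\in\tilde\#\nu(\alpha)$ and $\nu(\alpha\#\beta)\in\nu(\alpha)\tilde\#\nu(\beta)$. $\mathcal{F}_{\bf mbCcl}$ is the set of valuations with $\nu(\alpha)=t\Rightarrow\nu(\alpha\wedge\neg\alpha)=T$ for all $\alpha$. $\Gamma\vDash^{\mathsf{RN}}_{\mathcal{M}_{\bf mbCcl}}\varphi$ iff every $\nu\in\mathcal{F}_{\bf mbCcl}$ with $\nu[\Gamma]\subseteq D$ has $\nu(\varphi)\in D$. *)

(* Defs.v *)
From Stdlib Require Import Classical.

Inductive form : Type :=
| Var : nat -> form
| Neg : form -> form
| Circ : form -> form
| And : form -> form -> form
| Or : form -> form -> form
| Imp : form -> form -> form.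

Inductive mbCcl_axiom : form -> Prop :=
| Ax1 a b : mbCcl_axiom (Imp a (Imp b a))
| Ax2 a b c : mbCcl_axiom (Imp (Imp a (Imp b c)) (Imp (Imp a b) (Imp a c)))
| Ax3 a b : mbCcl_axiom (Imp a (Imp b (And a b)))
| Ax4 a b : mbCcl_axiom (Imp (And a b) a)
| Ax5 a b : mbCcl_axiom (Imp (And a b) b)
| Ax6 a b : mbCcl_axiom (Imp a (Or a b))
| Ax7 a b : mbCcl_axiom (Imp b (Or a b))
| Ax8 a b c : mbCcl_axiom (Imp (Imp a c) (Imp (Imp b c) (Imp (Or a b) c)))
| Ax9 a : mbCcl_axiom (Or a (Neg a))
| Ax10 a b : mbCcl_axiom (Or a (Imp a b))
| Ax11 a b : mbCcl_axiom (Imp (Circ a) (Imp a (Imp (Neg a) b)))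
| Ax12 a : mbCcl_axiom (Imp (Neg (And a (Neg a))) (Circ a)).

Inductive derivable (Gamma : form -> Prop) : form -> Prop :=
| d_hyp phi : Gamma phi -> derivable Gamma phi
| d_ax phi : mbCcl_axiom phi -> derivable Gamma phi
| d_mp phi psi : derivable Gamma phi -> derivable Gamma (Imp phi psi) ->
                 derivable Gamma psi.

Inductive tv : Type := vF | vt | vT.

Definition designated (x : tv) : Prop := x = vt \/ x = vT.

(* A multioperation outputs either D or U; we encode the output set by a bool:
   true = D, false = U, and [memb b z] is membership of z in that set. *)
Definition memb (b : bool) (z : tv) : Prop :=
  if b then designated z else z = vF.

Definition m_or (x y : tv) : bool :=
  match x, y with vF, vF => false | _, _ => true end.
Definition m_and (x y : tv) : bool :=
  match x, y with vF, _ => false | _, vF => false | _, _ => true end.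
Definition m_neg (x : tv) : bool :=
  match x with vF => true | vt => true | vT => false end.
Definition m_imp (x y : tv) : bool :=
  match x, y with vF, _ => true | _, vF => false | _, _ => true end.
Definition m_circ (x : tv) : bool :=
  match x with vF => true | vt => false | vT => true end.

Definition valuation (v : form -> tv) : Prop :=
  (forall a, memb (m_neg (v a)) (v (Neg a))) /\
  (forall a, memb (m_circ (v a)) (v (Circ a))) /\
  (forall a b, memb (m_and (v a) (v b)) (v (And a b))) /\
  (forall a b, memb (m_or (v a) (v b)) (v (Or a b))) /\
  (forall a b, memb (m_imp (v a) (v b)) (v (Imp a b))).

Definition F_mbCcl (v : form -> tv) : Prop :=
  valuation v /\ (forall a, v a = vt -> v (And a (Neg a)) = vT).

Definition RN_consequence (Gamma : form -> Prop) (phi : form) : Prop :=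
  forall v, F_mbCcl v -> (forall g, Gamma g -> designated (v g)) -> designated (v phi).

(* Main.v *)
Require Import Defs.
From Stdlib Require Import Classical ClassicalEpsilon Arith Lia Cantor.

Fixpoint code (f : form) : nat :=
  match f with
  | Var n => Cantor.to_nat (0, n)
  | Neg a => Cantor.to_nat (1, code a)
  | Circ a => Cantor.to_nat (2, code a)
  | And a b => Cantor.to_nat (3, Cantor.to_nat (code a, code b))
  | Or a b => Cantor.to_nat (4, Cantor.to_nat (code a, code b))
  | Imp a b => Cantor.to_nat (5, Cantor.to_nat (code a, code b))
  end.

Lemma to_nat_inj p q : Cantor.to_nat p = Cantor.to_nat q -> p = q.
Proof. intro H. rewrite <- (cancel_of_to p), <- (cancel_of_to q), H. reflexivity. Qed.

Lemma code_inj : forall x y, code x = code y -> x = y.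
Proof.
  induction x; destruct y; cbn [code]; intro H; apply to_nat_inj in H;
  apply pair_equal_spec in H as [H1 H2]; try discriminate;
  try (apply to_nat_inj in H2; apply pair_equal_spec in H2 as [H2 H3]);
  f_equal; auto.
Qed.

Lemma derivable_mono (G H : form -> Prop) f :
  (forall x, G x -> H x) -> derivable G f -> derivable H f.
Proof. intros S D; induction D. apply d_hyp; auto. apply d_ax; auto. exact (d_mp _ _ _ IHD1 IHD2). Qed.

Lemma imp_self G a : derivable G (Imp a a).
Proof.
  eapply d_mp. apply d_ax, (Ax1 a a).
  eapply d_mp. apply d_ax, (Ax1 a (Imp a a)).
  apply d_ax, Ax2.
Qed.

Lemma deduction G a b : derivable (fun y => G y \/ y = a) b -> derivable G (Imp a b).
Proof.
  intro D; induction D.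
  - destruct H as [H|H].
    + eapply d_mp. apply d_hyp, H. apply d_ax, Ax1.
    + subst; apply imp_self.
  - eapply d_mp. apply d_ax, H. apply d_ax, Ax1.
  - eapply d_mp. exact IHD1. eapply d_mp. exact IHD2. apply d_ax, Ax2.
Qed.

Section Lind.
Variable Gamma : form -> Prop.
Variable phi : form.

Fixpoint D (n : nat) : form -> Prop :=
  match n with
  | 0 => Gamma
  | S n => fun x => D n x \/ (code x = n /\ ~ derivable (fun y => D n y \/ y = x) phi)
  end.

Definition Delta x := exists n, D n x.

Lemma D_mono n m x : n <= m -> D n x -> D m x.
Proof. induction 1; simpl; auto. Qed.

Lemma D_fin f : derivable Delta f -> exists n, derivable (D n) f.
Proof.
  induction 1.
  - destruct H as [n Hn]. exists n. apply d_hyp, Hn.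
  - exists 0. apply d_ax, H.
  - destruct IHderivable1 as [n1 H1], IHderivable2 as [n2 H2].
    exists (n1 + n2). eapply d_mp.
    + eapply derivable_mono; [|exact H1]. intros; eapply D_mono; [|eauto]; lia.
    + eapply derivable_mono; [|exact H2]. intros; eapply D_mono; [|eauto]; lia.
Qed.

Lemma D_cons n : ~ derivable Gamma phi -> ~ derivable (D n) phi.
Proof.
  intro H0; induction n; simpl; auto.
  intro Hd.
  destruct (classic (exists x, code x = n /\ ~ derivable (fun y => D n y \/ y = x) phi)) as [[x [Hc Hx]]|Hno].
  - apply Hx. eapply derivable_mono; [|exact Hd]. simpl. intros y [Hy|[Hy Hy']]; auto.
    right. apply code_inj. congruence.
  - apply IHn. eapply derivable_mono; [|exact Hd]. intros y [Hy|Hy]; auto.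
    exfalso. apply Hno. exists y; exact Hy.
Qed.

Hypothesis Hng : ~ derivable Gamma phi.

Lemma Delta_cons : ~ derivable Delta phi.
Proof. intro H. destruct (D_fin _ H) as [n Hn]. exact (D_cons n Hng Hn). Qed.

Lemma Delta_max x : ~ Delta x -> derivable Delta (Imp x phi).
Proof.
  intro Hx. apply deduction.
  apply NNPP; intro Hn. apply Hx. exists (S (code x)). simpl. right. split; auto.
  intro Hd. apply Hn. eapply derivable_mono; [|exact Hd]. intros y [Hy|Hy]; [left; exists (code x); auto|right; auto].
Qed.

Lemma Delta_closed x : derivable Delta x -> Delta x.
Proof.
  intro H. apply NNPP; intro Hx. apply Delta_cons. eapply d_mp. exact H. apply Delta_max, Hx.
Qed.

Lemma in_ax a : mbCcl_axiom a -> Delta a.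
Proof. intro; apply Delta_closed, d_ax; auto. Qed.

Lemma in_mp a b : Delta a -> Delta (Imp a b) -> Delta b.
Proof. intros H1 H2; apply Delta_closed; exact (d_mp _ _ _ (d_hyp _ _ H1) (d_hyp _ _ H2)). Qed.

Lemma phi_notin : ~ Delta phi.
Proof. intro H; apply Delta_cons, d_hyp, H. Qed.

Lemma and_iff a b : Delta (And a b) <-> Delta a /\ Delta b.
Proof.
  split.
  - intro H; split; eapply in_mp; eauto using in_ax, Ax4, Ax5.
  - intros [Ha Hb]. eapply in_mp; [exact Hb|]. eapply in_mp; [exact Ha|]. apply in_ax, Ax3.
Qed.

Lemma or_iff a b : Delta (Or a b) <-> Delta a \/ Delta b.
Proof.
  split.
  - intro H. apply NNPP; intro Hn.
    assert (Ha : ~ Delta a) by tauto. assert (Hb : ~ Delta b) by tauto.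
    apply Delta_cons. eapply d_mp. apply d_hyp, H.
    eapply d_mp. apply Delta_max, Hb. eapply d_mp. apply Delta_max, Ha. apply d_ax, Ax8.
  - intros [H|H]; eapply in_mp; eauto using in_ax, Ax6, Ax7.
Qed.

Lemma imp_iff a b : Delta (Imp a b) <-> (~ Delta a \/ Delta b).
Proof.
  split.
  - intro H. destruct (classic (Delta a)); [right; eapply in_mp; eauto | left; auto].
  - intros [H|H].
    + pose proof (in_ax _ (Ax10 a b)) as Hab. apply or_iff in Hab. tauto.
    + eapply in_mp; [exact H|]. apply in_ax, Ax1.
Qed.

Lemma neg_in a : ~ Delta a -> Delta (Neg a).
Proof. intro H. pose proof (in_ax _ (Ax9 a)) as Hx. apply or_iff in Hx. tauto. Qed.

Lemma circ_bad a : Delta (Circ a) -> Delta a -> Delta (Neg a) -> False.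
Proof.
  intros H1 H2 H3. apply phi_notin. eapply in_mp; [exact H3|]. eapply in_mp; [exact H2|].
  eapply in_mp; [exact H1|]. apply in_ax, Ax11.
Qed.

Lemma circ_good a : Delta (Neg (And a (Neg a))) -> Delta (Circ a).
Proof. intro H. eapply in_mp; [exact H|]. apply in_ax, Ax12. Qed.

Definition val (a : form) : tv :=
  match excluded_middle_informative (Delta a) with
  | right _ => vF
  | left _ => match excluded_middle_informative (Delta (Neg a)) with
              | left _ => vt
              | right _ => vT
              end
  end.

Lemma des_iff a : designated (val a) <-> Delta a.
Proof.
  unfold val, designated.
  destruct (excluded_middle_informative (Delta a)); [|split; [intros [H|H]; discriminate|tauto]].
  destruct (excluded_middle_informative (Delta (Neg a))); tauto.
Qed.

Lemma val_F a : val a = vF <-> ~ Delta a.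
Proof.
  unfold val. destruct (excluded_middle_informative (Delta a)).
  - destruct (excluded_middle_informative (Delta (Neg a))); split; intro; try discriminate; tauto.
  - tauto.
Qed.

Lemma memb_of (b : bool) a : (b = true -> Delta a) -> (b = false -> ~ Delta a) -> memb b (val a).
Proof.
  destruct b; simpl; intros H1 H2.
  - apply des_iff; auto.
  - apply val_F; auto.
Qed.

Lemma val_cases a : (val a = vF /\ ~ Delta a) \/ (val a = vt /\ Delta a /\ Delta (Neg a))
                    \/ (val a = vT /\ Delta a /\ ~ Delta (Neg a)).
Proof.
  unfold val. destruct (excluded_middle_informative (Delta a)).
  - destruct (excluded_middle_informative (Delta (Neg a))); tauto.
  - tauto.
Qed.

Lemma val_F_mbCcl : F_mbCcl val.
Proof.
  split; [repeat split|].
  - intro a. apply memb_of; destruct (val_cases a) as [[E H]|[[E H]|[E H]]]; rewrite E; simpl;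
      intro X; try discriminate; first [tauto | apply neg_in; tauto].
  - intro a. apply memb_of; destruct (val_cases a) as [[E H]|[[E H]|[E H]]]; rewrite E; simpl;
      intro X; try discriminate.
    + apply circ_good, neg_in. rewrite and_iff. tauto.
    + apply circ_good, neg_in. rewrite and_iff. tauto.
    + intro C; eapply circ_bad; eauto; tauto.
  - intros a b. apply memb_of; rewrite and_iff;
      destruct (val_cases a) as [[E H]|[[E H]|[E H]]]; rewrite E;
      destruct (val_cases b) as [[E' H']|[[E' H']|[E' H']]]; rewrite E'; simpl; intro; try discriminate; tauto.
  - intros a b. apply memb_of; rewrite or_iff;
      destruct (val_cases a) as [[E H]|[[E H]|[E H]]]; rewrite E;
      destruct (val_cases b) as [[E' H']|[[E' H']|[E' H']]]; rewrite E'; simpl; intro; try discriminate; tauto.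
  - intros a b. apply memb_of; rewrite imp_iff;
      destruct (val_cases a) as [[E H]|[[E H]|[E H]]]; rewrite E;
      destruct (val_cases b) as [[E' H']|[[E' H']|[E' H']]]; rewrite E'; simpl; intro; try discriminate; tauto.
  - intros a Ha. destruct (val_cases a) as [[E H]|[[E H]|[E H]]]; rewrite E in Ha; try discriminate.
    destruct (val_cases (And a (Neg a))) as [[E' H']|[[E' H']|[E' H']]]; auto.
    + exfalso; apply H'; apply and_iff; tauto.
    + exfalso. eapply circ_bad; [apply circ_good; exact (proj2 H')|tauto|tauto].
Qed.

End Lind.

Theorem mainTheorem4 (Gamma : form -> Prop) (phi : form) :
  RN_consequence Gamma phi -> derivable Gamma phi.
Proof.
  intro H. apply NNPP; intro Hn.
  pose proof (H (val Gamma phi) (val_F_mbCcl Gamma phi Hn)) as H1.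
  apply (phi_notin Gamma phi Hn). eapply des_iff; try assumption. apply H1.
  intros g Hg. apply des_iff; auto. exists 0. exact Hg.
Qed.
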